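(* Let $n,h\ge 2$ be integers (number of alternatives and number of individuals) and let $M$ be the Minimax social choice correspondence. Define $T_1=\{(h,n): h\le 3\}\cup\{(h,n): n\le 3\}\cup\{(4,4),(5,4),(7,4),(5,5)\}$, $T_2=\{(h,n): h=2\}\cup\{(h,n): n\le 3\}\cup\{(4,4)\}$, $T_3=\{(h,n): n=2\}\cup\{(3,3)\}$ (all sets of pairs of integers $\ge 2$). Then for each $j\in\{1,2,3\}$: $M$ is immune to the reversal bias of type $j$ if and only if $(h,n)\in T_j$.
   Context: Let $N=\{1,\dots,n\}$ be the set of alternatives and $H=\{1,\dots,h\}$ the set of individuals. A preference relation is a linear order on $N$; a preference profile is an $h$-tuple $p=(p_1,\dots,p_h)$ of linear orders on $N$, and $\mathcal P$ is the set of all profiles. For a linear order $q$, $q^r$ is the reversed order ($x$ above $y$ in $q^r$ iff $y$ above $x$ in $q$), and $p^r=(p_1^r,\dots,p_h^r)$. Write $x>_{p_i}y$ if $x\neq y$ and $x$ is ranked above $y$ by $p_i$. A social choice correspondence (SCC) is a function from $\mathcal P$ to the nonempty subsets of $N$. The Minimax SCC is $M(p)=\mathrm{argmin}_{x\in N}\max_{y\in N\setminus\{x\}}|\{i\in H: y>_{p_i}x\}|$. An SCC $C$ suffers the reversal bias of type 1 if there exist $p\in\mathcal P$ and $x\in N$ with $C(p)=C(p^r)=\{x\}$; of type 2 if there exists $p$ with $|C(p)|=1$ and $C(p)\cap C(p^r)\neq\varnothing$; of type 3 if there exists $p$ with $|C(p)|<n$ and $C(p)\cap C(p^r)\neq\varnothing$.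 $C$ is immune to the reversal bias of type $j$ if it does not suffer it. *)

(* Defs.v *)
From mathcomp Require Import all_boot all_fingroup.
Set Implicit Arguments. Unset Strict Implicit. Unset Printing Implicit Defensive.

(* Alternatives N = 'I_n, individuals H = 'I_h.
   A linear order on 'I_n is encoded by a permutation q : {perm 'I_n},
   where q x is the rank of x (rank 0 = top). *)
Definition linord (n : nat) := {perm 'I_n}.

Definition prefers n (q : linord n) (x y : 'I_n) : bool := (q x < q y)%N.

Definition rev_linord n (q : linord n) : linord n :=
  perm (inj_comp (@rev_ord_inj n) (@perm_inj _ q)).

Definition profile (h n : nat) := {ffun 'I_h -> linord n}.

Definition rev_profile h n (p : profile h n) : profile h n :=
  [ffun i => rev_linord (p i)].

Definition SCC (h n : nat) := profile h n -> {set 'I_n}.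

Definition beats h n (p : profile h n) (y x : 'I_n) : nat :=
  #|[set i : 'I_h | prefers (p i) y x]|.

Definition maxscore h n (p : profile h n) (x : 'I_n) : nat :=
  \max_(y | y != x) beats p y x.

Definition minimax h n : SCC h n :=
  fun p => [set x | [forall y, maxscore p x <= maxscore p y]].

Definition suffers1 h n (C : SCC h n) : Prop :=
  exists (p : profile h n) (x : 'I_n), C p = [set x] /\ C (rev_profile p) = [set x].
Definition suffers2 h n (C : SCC h n) : Prop :=
  exists p : profile h n, #|C p| = 1 /\ C p :&: C (rev_profile p) != set0.
Definition suffers3 h n (C : SCC h n) : Prop :=
  exists p : profile h n, #|C p| < n /\ C p :&: C (rev_profile p) != set0.

Definition T1 (h n : nat) : bool :=
  [|| h <= 3, n <= 3, (h == 4) && (n == 4), (h == 5) && (n == 4),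
      (h == 7) && (n == 4) | (h == 5) && (n == 5)].
Definition T2 (h n : nat) : bool :=
  [|| h == 2, n <= 3 | (h == 4) && (n == 4)].
Definition T3 (h n : nat) : bool :=
  (n == 2) || ((h == 3) && (n == 3)).

(* Main.v *)
Require Import Defs.
From mathcomp Require Import all_boot all_fingroup zify.
Set Implicit Arguments. Unset Strict Implicit. Unset Printing Implicit Defensive.

Section Basic.
Variables (h n : nat).
Implicit Types (p : profile h n) (q : linord n) (x y z : 'I_n).

Lemma prefers_rev q x y : prefers (rev_linord q) x y = prefers q y x.
Proof.
rewrite /prefers /rev_linord !permE /=.
have := ltn_ord (q x); have := ltn_ord (q y); lia.
Qed.

Lemma prefers_irr q x : prefers q x x = false.
Proof. by rewrite /prefers ltnn. Qed.

Lemma prefers_asym q x y : x != y -> prefers q x y = ~~ prefers q y x.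
Proof.
move=> nxy; rewrite /prefers -leqNgt [RHS]leq_eqVlt.
case: eqP => // E; exfalso; move: nxy; have -> : x = y by apply: (@perm_inj _ q); apply: ord_inj.
by rewrite eqxx.
Qed.

Lemma beats_rev p y x : beats (rev_profile p) y x = beats p x y.
Proof.
rewrite /beats; apply: eq_card => i; by rewrite !inE ffunE prefers_rev.
Qed.

Lemma beats_le p y x : beats p y x <= h.
Proof. rewrite /beats -[X in _ <= X]card_ord; exact: max_card. Qed.

Lemma beats_compl p y x : y != x -> beats p y x + beats p x y = h.
Proof.
move=> nyx; rewrite /beats -[X in _ = X]card_ord -(cardsC [set i | prefers (p i) y x]).
congr (_ + _); apply: eq_card => i; by rewrite !inE (prefers_asym _ nyx) negbK.
Qed.

Lemma beats_self p x : beats p x x = 0.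
Proof. rewrite /beats; apply/eqP; rewrite cards_eq0; apply/eqP/setP => i; by rewrite !inE prefers_irr. Qed.

Lemma beats_sum p y x : beats p y x = \sum_(i < h) (prefers (p i) y x : nat).
Proof.
rewrite /beats -sum1_card big_mkcond /=; apply: eq_bigr => i _.
rewrite inE; by case: (prefers _ _ _).
Qed.

Lemma ms_ge p x y : y != x -> beats p y x <= maxscore p x.
Proof. move=> nyx; exact: (@leq_bigmax_cond _ (fun y => y != x) (fun y => beats p y x)). Qed.

Lemma ms_le p x k : (forall y, y != x -> beats p y x <= k) -> maxscore p x <= k.
Proof. move=> H; apply/bigmax_leqP => y; exact: H. Qed.

Lemma ms_bound p x : maxscore p x <= h.
Proof. apply: ms_le => y _; exact: beats_le. Qed.

Lemma ms_att p x : 1 < n -> exists2 y, y != x & beats p y x = maxscore p x.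
Proof.
move=> n2.
have : 0 < #|predC1 x| by rewrite cardC1 card_ord; lia.
move/(eq_bigmax_cond (fun y => beats p y x)) => [y Hy E].
exists y => //; rewrite /maxscore -E; apply: eq_bigl => z; by rewrite inE.
Qed.

Lemma inM p x : (x \in minimax p) = [forall y, maxscore p x <= maxscore p y].
Proof. by rewrite /minimax inE. Qed.

Lemma inMP p x : reflect (forall y, maxscore p x <= maxscore p y) (x \in minimax p).
Proof. rewrite inM; exact: forallP. Qed.

Lemma ms_rev p x : maxscore (rev_profile p) x = \max_(y | y != x) beats p x y.
Proof. by apply: eq_bigr => y _; rewrite beats_rev. Qed.

End Basic.

Section Count.
Variables (h n : nat).
Implicit Types (p : profile h n) (x y z : 'I_n).

Lemma card_neq x : #|[set y : 'I_n | y != x]| = n.-1.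
Proof. have := cardC1 x; rewrite card_ord => <-; apply: eq_card => y; by rewrite !inE. Qed.

Lemma card_neq2 x t : t != x -> #|[set y : 'I_n | (y != x) && (y != t)]| = n - 2.
Proof.
move=> ntx; have := cardD1 t (predC1 x); rewrite cardC1 card_ord inE ntx.
rewrite (_ : #|[predD1 predC1 x & t]| = #|[set y : 'I_n | (y != x) && (y != t)]|); first by lia.
apply: eq_card => y; rewrite !inE; by case: (y != x); case: (y != t).
Qed.

Lemma count_bound p x k : 1 < n ->
  (forall y, y != x -> exists2 z, (z != x) && (z != y) & k <= beats p z y) ->
  n.-1 * k <= h * (n - 2).
Proof.
move=> n2 Hex.
pose zf y := odflt x [pick z | (z != x) && (z != y) && (k <= beats p z y)].
have Hz : forall y, y != x -> [&& zf y != x, zf y != y & k <= beats p (zf y) y].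
  move=> y nyx; rewrite /zf; case: pickP => [z Hz | H] /=; first by rewrite -andbA in Hz.
  have [z Hz Hk] := Hex y nyx; have := H z; by rewrite Hz Hk.
have [y0 Hy0] : exists y0, y0 != x.
  have : 0 < #|[set y : 'I_n | y != x]| by rewrite card_neq; lia.
  move/card_gt0P => [y0]; rewrite inE => ?; by exists y0.
apply: (@leq_trans (\sum_(y | y != x) beats p (zf y) y)).
  rewrite -(card_neq x) -sum_nat_cond_const; apply: leq_sum => y nyx.
  by case/and3P: (Hz y nyx).
under eq_bigr => y _ do rewrite beats_sum.
rewrite exchange_big /=; apply: (@leq_trans (\sum_(i < h) (n - 2))); last by rewrite sum_nat_const card_ord.
apply: leq_sum => i _.
case: (@arg_minnP _ y0 (fun y => y != x) (fun y => p i y : nat) Hy0) => t ntx tmin.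
rewrite (bigD1 t ntx) /=.
have -> : prefers (p i) (zf t) t = false.
  rewrite /prefers ltnNge; case/and3P: (Hz t ntx) => H1 _ _; by rewrite tmin.
rewrite add0n -(card_neq2 ntx) -sum1dep_card; apply: leq_sum => y _; by case: prefers.
Qed.

End Count.

Section Ineq.
Variables (h n : nat).
Implicit Types (p : profile h n) (x y z : 'I_n).

Lemma uniq_win p x y : minimax p = [set x] -> y != x -> maxscore p x < maxscore p y.
Proof.
move=> E nyx.
have xin : x \in minimax p by rewrite E set11.
have : y \notin minimax p by rewrite E in_set1.
rewrite inM negb_forall => /existsP [v]; rewrite -ltnNge => Hv.
move/inMP: xin => /(_ v) Hx; exact: leq_ltn_trans Hx Hv.
Qed.

Lemma core p x : 1 < n -> x \in minimax p -> x \in minimax (rev_profile p) ->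
  (forall y, y != x -> maxscore p x < maxscore p y) ->
  (exists K, h <= 2 * K /\ n.-1 * K.+1 <= h * (n - 2)) \/
  (maxscore p x < maxscore (rev_profile p) x /\
   (forall u, u != x -> exists2 w, (w != x) && (w != u) &
        maxscore (rev_profile p) x <= beats (rev_profile p) w u)).
Proof.
move=> n2 xin xinr U.
set m := maxscore p x; set mr := maxscore (rev_profile p) x.
have Bm : forall y, y != x -> beats p y x <= m by move=> y; exact: ms_ge.
have Bmr : forall y, y != x -> beats p x y <= mr.
  move=> y nyx; rewrite /mr -(beats_rev p y x); exact: ms_ge.
have [y0 ny0] : exists y0, y0 != x.
  have : 0 < #|[set y : 'I_n | y != x]| by rewrite card_neq; lia.
  move/card_gt0P => [y0]; rewrite inE => ?; by exists y0.
have Hsum : h <= m + mr.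
  have := beats_compl p ny0; have := Bm _ ny0; have := Bmr _ ny0; lia.
case: (leqP mr m) => Hc.
- left; exists m; split; first by lia.
  apply: (count_bound (p := p) (x := x)) => // y nyx.
  have [z nzy Ez] := ms_att p y n2.
  exists z; last by rewrite Ez; exact: U.
  rewrite eq_sym nzy andbT; apply/negP => /eqP zx; subst z.
  have := Bmr _ nyx; have := U _ nyx; rewrite -Ez; lia.
- right; split => // u nux.
  have [w nwu Ew] := ms_att (rev_profile p) u n2.
  exists w; last by rewrite Ew; move/inMP: xinr; apply.
  rewrite eq_sym nwu andbT; apply/negP => /eqP wx; subst w.
  move: Ew; rewrite beats_rev => Ew.
  have := Bm _ nux; have : mr <= maxscore (rev_profile p) u by move/inMP: xinr; apply.
  rewrite -Ew; lia.
Qed.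

Lemma type2_ineq : 1 < n -> suffers2 (@minimax h n) ->
  (exists K, h <= 2 * K /\ n.-1 * K.+1 <= h * (n - 2)) \/
  (exists K, h < 2 * K /\ n.-1 * K <= h * (n - 2)).
Proof.
move=> n2 [p [C1 Hne]]; have [x E] : exists x, minimax p = [set x] by apply/cards1P/eqP.
have xin : x \in minimax p by rewrite E set11.
have xinr : x \in minimax (rev_profile p).
  case/set0Pn: Hne => v; rewrite inE E in_set1 => /andP [/eqP -> //].
have U := fun y (H : y != x) => uniq_win E H.
case: (core n2 xin xinr U) => [H | [Hlt H]]; first by left. right.
exists (maxscore (rev_profile p) x); split.
  have [y0 ny0] : exists y0, y0 != x.
    have : 0 < #|[set y : 'I_n | y != x]| by rewrite card_neq; lia.
    move/card_gt0P => [y0]; rewrite inE => ?; by exists y0.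
  have := beats_compl p ny0; have := ms_ge p ny0.
  have : beats p x y0 <= maxscore (rev_profile p) x by rewrite -beats_rev; exact: ms_ge.
  lia.
exact: count_bound H.
Qed.

Lemma type1_ineq : 1 < n -> suffers1 (@minimax h n) ->
  exists K, h <= 2 * K /\ n.-1 * K.+1 <= h * (n - 2).
Proof.
move=> n2 [p [x [E Er]]].
have xin : x \in minimax p by rewrite E set11.
have xinr : x \in minimax (rev_profile p) by rewrite Er set11.
case: (core n2 xin xinr (fun y (H : y != x) => uniq_win E H)) => [// | [Hlt _]].
set mr := maxscore (rev_profile p) x in Hlt *.
have Ur := fun y (H : y != x) => uniq_win Er H.
have [y0 ny0] : exists y0, y0 != x.
  have : 0 < #|[set y : 'I_n | y != x]| by rewrite card_neq; lia.
  move/card_gt0P => [y0]; rewrite inE => ?; by exists y0.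
exists mr; split.
  have := beats_compl p ny0; have := ms_ge p ny0.
  have : beats p x y0 <= mr by rewrite /mr -beats_rev; exact: ms_ge.
  lia.
apply: (count_bound (p := rev_profile p) (x := x)) => // u nux.
have [w nwu Ew] := ms_att (rev_profile p) u n2.
exists w; last by rewrite Ew; exact: Ur.
rewrite eq_sym nwu andbT; apply/negP => /eqP wx; subst w.
move: Ew; rewrite beats_rev => Ew.
have := ms_ge p nux; have := Ur _ nux; rewrite -Ew; lia.
Qed.

End Ineq.

Section Three.
Variables (h n : nat).
Implicit Types (p : profile h n) (x y z : 'I_n).

Lemma triangle p a b c : a != b -> b != c -> c != a ->
  h <= beats p a b + beats p b c + beats p c a <= 2 * h.
Proof.
move=> nab nbc nca; rewrite !beats_sum -!big_split /=.
have Hd : forall i (u v : 'I_n), u != v -> (p i u : nat) != p i v.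
  move=> i u v nuv; apply/negP => /eqP /ord_inj /perm_inj E; by rewrite E eqxx in nuv.
apply/andP; split.
  apply: (@leq_trans (\sum_(i < h) 1)); first by rewrite sum_nat_const card_ord muln1.
  apply: leq_sum => i _.
  have := Hd i _ _ nab; have := Hd i _ _ nbc; have := Hd i _ _ nca; rewrite /prefers; lia.
apply: (@leq_trans (\sum_(i < h) 2)); last by rewrite sum_nat_const card_ord mulnC.
apply: leq_sum => i _.
have := Hd i _ _ nab; have := Hd i _ _ nbc; have := Hd i _ _ nca; rewrite /prefers; lia.
Qed.

Lemma ms3 p x y z : n = 3 -> y != x -> z != x -> z != y ->
  maxscore p x = maxn (beats p y x) (beats p z x).
Proof.
move=> n3 nyx nzx nzy.
rewrite /maxscore (bigD1 y nyx) /= (bigD1 z) /=; last by rewrite nzx nzy.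
rewrite big_pred0 ?maxn0 // => v; apply/negP => /andP [/andP [nvx nvy] nvz].
move: nvx nvy nvz nyx nzx nzy; rewrite -!(inj_eq val_inj) /=.
have := ltn_ord v; have := ltn_ord x; have := ltn_ord y; have := ltn_ord z; lia.
Qed.

Lemma ms3r p x y z : n = 3 -> y != x -> z != x -> z != y ->
  maxscore (rev_profile p) x = maxn (beats p x y) (beats p x z).
Proof. move=> *; by rewrite (ms3 _ (y:=y) (z:=z)) // !beats_rev. Qed.

End Three.

Lemma immune3_33 : ~ suffers3 (@minimax 3 3).
Proof.
move=> [p [Hc Hne]].
case/set0Pn: Hne => x; rewrite inE => /andP [xin xinr].
have [w wout] : exists w, w \notin minimax p.
  apply/existsP; rewrite -negb_forall; apply/negP => /forallP H.
  have : minimax p = [set: 'I_3] by apply/setP => v; rewrite in_setT; apply: H.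
  by move=> E; rewrite E cardsT card_ord in Hc.
have nwx : w != x by apply/negP => /eqP E; rewrite E xin in wout.
have [z] : exists z, z \in [set v : 'I_3 | (v != x) && (v != w)].
  apply/card_gt0P; by rewrite card_neq2.
rewrite inE => /andP [nzx nzw].
have Hw : maxscore p x < maxscore p w.
  move: wout; rewrite inM negb_forall => /existsP [v]; rewrite -ltnNge => Hv.
  move/inMP: xin => /(_ v) Hx; exact: leq_ltn_trans Hx Hv.
have Hz : maxscore p x <= maxscore p z by move/inMP: xin; apply.
have Hwr : maxscore (rev_profile p) x <= maxscore (rev_profile p) w by move/inMP: xinr; apply.
have Hzr : maxscore (rev_profile p) x <= maxscore (rev_profile p) z by move/inMP: xinr; apply.
have nxw : x != w by rewrite eq_sym.
have nxz : x != z by rewrite eq_sym.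
have nwz : w != z by rewrite eq_sym.
rewrite (ms3 _ (y := w) (z := z)) // (ms3 _ (y := x) (z := z)) // in Hw.
rewrite (ms3 _ (y := w) (z := z)) // (ms3 _ (y := x) (z := w)) // in Hz.
rewrite (ms3r _ (y := w) (z := z)) // (ms3r _ (y := x) (z := z)) // in Hwr.
rewrite (ms3r _ (y := w) (z := z)) // (ms3r _ (y := x) (z := w)) // in Hzr.
have := beats_compl p nwx; have := beats_compl p nzx; have := beats_compl p nzw.
have := triangle p nxw nwz nzx.
lia.
Qed.

Lemma s3_s2_n2 h : suffers3 (@minimax h 2) -> suffers2 (@minimax h 2).
Proof.
move=> [p [Hc Hne]]; exists p; split => //.
case/set0Pn: Hne => x; rewrite inE => /andP [xin _].
have : 0 < #|minimax p| by apply/card_gt0P; exists x.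
move: Hc; lia.
Qed.

Lemma s1_s2 h n : suffers1 (@minimax h n) -> suffers2 (@minimax h n).
Proof.
move=> [p [x [E Er]]]; exists p; split; first by rewrite E cards1.
apply/set0Pn; exists x; by rewrite inE E Er set11.
Qed.

Lemma s2_s3 h n : 1 < n -> suffers2 (@minimax h n) -> suffers3 (@minimax h n).
Proof. move=> n2 [p [Hc Hne]]; exists p; split => //; by rewrite Hc. Qed.

Section Plus2.
Variables (h n : nat).
Implicit Types (p : profile h n) (x y z : 'I_n).

Definition add2 p (q : linord n) : profile (h + 2) n :=
  [ffun i => match split i with inl j => p j | inr j => if j == ord0 then q else rev_linord q end].

Lemma ms_shift (F G : 'I_n -> nat) x : 1 < n -> (forall y, y != x -> G y = (F y).+1) ->
  \max_(y | y != x) G y = (\max_(y | y != x) F y).+1.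
Proof.
move=> n2 HG; apply/eqP; rewrite eqn_leq; apply/andP; split.
  apply/bigmax_leqP => y nyx; rewrite HG // ltnS; exact: (@leq_bigmax_cond _ (fun y => y != x) F).
have : 0 < #|predC1 x| by rewrite cardC1 card_ord; lia.
move/(eq_bigmax_cond F) => [y Hy E].
rewrite (_ : \max_(y | y != x) F y = \max_(i in predC1 x) F i); last by apply: eq_bigl => z; rewrite inE.
rewrite E; move: Hy; rewrite inE => Hy; rewrite -HG //.
exact: (@leq_bigmax_cond _ (fun y => y != x) G).
Qed.

Lemma beats_add2 p q y x : y != x -> beats (add2 p q) y x = (beats p y x).+1.
Proof.
move=> nyx; rewrite !beats_sum big_split_ord /=.
rewrite big_ord_recr big_ord_recr big_ord0 /=.
have -> : \sum_(i < h) (prefers (add2 p q (lshift 2 i)) y x : nat) = \sum_(i < h) (prefers (p i) y x : nat).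
  apply: eq_bigr => i _; by rewrite /add2 ffunE (unsplitK (inl _ i)).
rewrite /add2 !ffunE.
have S : forall k : 'I_2, split (rshift h k) = inr k := fun k => unsplitK (inr _ k).
rewrite !S /=.
rewrite prefers_rev (prefers_asym _ nyx); case: prefers => /=; lia.
Qed.


Lemma minimax_add2 p q : 1 < n -> minimax (add2 p q) = minimax p /\
  minimax (rev_profile (add2 p q)) = minimax (rev_profile p).
Proof.
move=> n2.
have E1 : forall x, maxscore (add2 p q) x = (maxscore p x).+1.
  move=> x; apply: ms_shift => // y nyx; exact: beats_add2.
have E2 : forall x, maxscore (rev_profile (add2 p q)) x = (maxscore (rev_profile p) x).+1.
  move=> x; rewrite !ms_rev; apply: ms_shift => // y nyx; rewrite beats_add2 //; by rewrite eq_sym.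
split; apply/setP => x; rewrite !inM; apply: eq_forallb => y; by rewrite ?E1 ?E2 ltnS.
Qed.

Lemma plus2 j : 1 < n -> (j = 1 \/ j = 2 \/ j = 3) ->
  (match j with 1 => suffers1 (@minimax h n) | 2 => suffers2 (@minimax h n) | _ => suffers3 (@minimax h n) end) ->
  (match j with 1 => suffers1 (@minimax (h + 2) n) | 2 => suffers2 (@minimax (h + 2) n) | _ => suffers3 (@minimax (h + 2) n) end).
Proof.
move=> n2 Hj.
have [q _] : exists q : linord n, True by exists 1%g.
case: Hj => [->|[->|->]] /=.
- move=> [p [x [E Er]]]; exists (add2 p q), x; by case: (minimax_add2 p q n2) => -> ->.
- move=> [p [Hc Hne]]; exists (add2 p q); by case: (minimax_add2 p q n2) => -> ->.
- move=> [p [Hc Hne]]; exists (add2 p q); by case: (minimax_add2 p q n2) => -> ->.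
Qed.

End Plus2.

Section Clone.
Variables (h n : nat) (y0 : 'I_n).
Implicit Types (p : profile h n) (q : linord n) (x y z a b : 'I_n).

Definition E : 'I_n -> 'I_n.+1 := @lift n.+1 ord_max.
Definition cq q : 'I_n.+1 := @lift n.+1 ord0 (q y0).
Definition cl_fun q (w : 'I_n.+1) : 'I_n.+1 :=
  match unlift ord_max w with Some a => lift (cq q) (q a) | None => cq q end.

Lemma E_inj : injective E.
Proof. exact: lift_inj. Qed.

Lemma Ez a : (E a != ord_max).
Proof. by rewrite eq_sym neq_lift. Qed.

Lemma zE a : (ord_max != E a).
Proof. exact: neq_lift. Qed.

Lemma cl_inj q : injective (cl_fun q).
Proof.
move=> w1 w2; rewrite /cl_fun.
case: (unliftP ord_max w1) => [a1 ->|->]; case: (unliftP ord_max w2) => [a2 ->|->] //.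
- by move/lift_inj/perm_inj => ->.
- move=> H; have := neq_lift (cq q) (q a1); by rewrite H eqxx.
- move=> H; have := neq_lift (cq q) (q a2); by rewrite -H eqxx.
Qed.

Definition clone q : linord n.+1 := perm (@cl_inj q).

Lemma clone_E q a : (clone q (E a) : nat) = bump (q y0).+1 (q a).
Proof. by rewrite /clone permE /cl_fun /E liftK. Qed.

Lemma clone_z q : (clone q ord_max : nat) = (q y0).+1.
Proof. by rewrite /clone permE /cl_fun unlift_none. Qed.

Lemma pref_EE q a b : prefers (clone q) (E a) (E b) = prefers q a b.
Proof. rewrite /prefers !clone_E /bump; case: leqP; case: leqP; lia. Qed.

Lemma pref_zE q b : prefers (clone q) ord_max (E b) = prefers q y0 b.
Proof. rewrite /prefers clone_E clone_z /bump; case: leqP; lia. Qed.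

Lemma pref_Ez q a : prefers (clone q) (E a) ord_max = (q a <= q y0).
Proof. rewrite /prefers clone_E clone_z /bump; case: leqP; lia. Qed.

Definition pc p : profile h n.+1 := [ffun i => clone (p i)].

Lemma bEE p a b : beats (pc p) (E a) (E b) = beats p a b.
Proof. apply: eq_card => i; by rewrite !inE ffunE pref_EE. Qed.

Lemma bzE p b : beats (pc p) ord_max (E b) = beats p y0 b.
Proof. apply: eq_card => i; by rewrite !inE ffunE pref_zE. Qed.

Lemma bEz p a : a != y0 -> beats (pc p) (E a) ord_max = beats p a y0.
Proof.
move=> nay; apply: eq_card => i; rewrite !inE ffunE pref_Ez /prefers leq_eqVlt.
case: eqP => // /ord_inj /perm_inj E'; by rewrite E' eqxx in nay.
Qed.

Lemma bEz0 p : beats (pc p) (E y0) ord_max = h.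
Proof.
rewrite /beats -[X in _ = X]card_ord -cardsT; apply: eq_card => i.
by rewrite !inE ffunE pref_Ez leqnn.
Qed.

Lemma max_split (P : pred 'I_n.+1) (F : 'I_n.+1 -> nat) :
  \max_(v | P v) F v = maxn (\max_(a : 'I_n | P (E a)) F (E a)) (if P ord_max then F ord_max else 0).
Proof.
rewrite big_mkcond big_ord_recr /= [in RHS]big_mkcond; congr maxn; apply: eq_bigr => a _.
have -> // : widen_ord (leqnSn n) a = E a.
apply: val_inj; by rewrite /= /bump leqNgt ltn_ord.
Qed.

Lemma msE p a : maxscore (pc p) (E a) = maxscore p a.
Proof.
rewrite /maxscore max_split zE bzE.
rewrite (eq_bigl (fun b => b != a)); last by move=> b; rewrite (inj_eq E_inj).
under eq_bigr => b _ do rewrite bEE.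
case: (eqVneq a y0) => [->|nay]; first by rewrite beats_self maxn0.
apply/maxn_idPl; apply: (ms_ge p (x := a) (y := y0)); by rewrite eq_sym.
Qed.

Lemma msz p : maxscore (pc p) ord_max = h.
Proof.
rewrite /maxscore max_split eqxx maxn0; apply/eqP; rewrite eqn_leq; apply/andP; split.
  apply/bigmax_leqP => b _; exact: beats_le.
rewrite -{1}(bEz0 p); exact: (@leq_bigmax_cond _ (fun b => E b != ord_max) (fun b => beats (pc p) (E b) ord_max) y0 (Ez y0)).
Qed.

Lemma msrE p a : a != y0 -> maxscore (rev_profile (pc p)) (E a) = maxscore (rev_profile p) a.
Proof.
move=> nay; rewrite !ms_rev max_split zE bEz //.
rewrite (eq_bigl (fun b => b != a)); last by move=> b; rewrite (inj_eq E_inj).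
under eq_bigr => b _ do rewrite bEE.
apply/maxn_idPl; rewrite -beats_rev -ms_rev; apply: ms_ge; by rewrite eq_sym.
Qed.

Lemma msrE0 p : maxscore (rev_profile (pc p)) (E y0) = h.
Proof.
rewrite !ms_rev max_split zE bEz0; apply/maxn_idPr.
apply/bigmax_leqP => b _; exact: beats_le.
Qed.

Lemma msrz p : maxscore (rev_profile (pc p)) ord_max = maxscore (rev_profile p) y0.
Proof.
rewrite !ms_rev max_split eqxx maxn0.
apply/eqP; rewrite eqn_leq; apply/andP; split.
  apply/bigmax_leqP => b _; rewrite bzE; case: (eqVneq b y0) => [->|nby]; first by rewrite beats_self.
  exact: (@leq_bigmax_cond _ (fun b => b != y0) (fun b => beats p y0 b) b nby).
apply/bigmax_leqP => b _; rewrite -bzE.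
exact: (@leq_bigmax_cond _ (fun b => E b != ord_max) (fun b => beats (pc p) ord_max (E b)) b (Ez b)).
Qed.

End Clone.
Arguments E {n} a.

Section CloneSets.
Variables (h n : nat) (y0 : 'I_n).
Implicit Types (p : profile h n) (x y z a b : 'I_n).

Lemma liftE a : @lift n.+1 ord_max a = E a.
Proof. by []. Qed.

Lemma L1 p : y0 \notin minimax p -> minimax (pc y0 p) = E @: minimax p.
Proof.
move=> yout; apply/setP => w; case: (unliftP ord_max w) => [a ->|->].
- rewrite liftE mem_imset; last exact: E_inj.
  rewrite !inM; apply/forallP/forallP => H b.
    by have := H (E b); rewrite !msE.
  case: (unliftP ord_max b) => [c ->|->]; first by rewrite liftE !msE; exact: H.
  rewrite msE msz; exact: ms_bound.
- have -> : (ord_max \in E @: minimax p) = false.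
    apply/negbTE/imsetP => [[a _ Ha]]; by have := Ez a; rewrite -Ha eqxx.
  apply/negbTE; rewrite inM negb_forall.
  move: yout; rewrite inM negb_forall => /existsP [v Hv]; apply/existsP; exists (E v).
  rewrite msz msE; move: Hv; have := ms_bound p y0; rewrite -!ltnNge; lia.
Qed.

Lemma ms_rpc_ge p b : maxscore (rev_profile p) b <= maxscore (rev_profile (pc y0 p)) (E b).
Proof.
case: (eqVneq b y0) => [->|nby]; first by rewrite msrE0; exact: ms_bound.
by rewrite msrE.
Qed.

Lemma L2 p x : x \in minimax (rev_profile p) -> x != y0 -> E x \in minimax (rev_profile (pc y0 p)).
Proof.
move=> xin nxy; rewrite inM; apply/forallP => w; rewrite msrE //.
case: (unliftP ord_max w) => [b ->|->]; last by rewrite msrz; move/inMP: xin; apply.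
rewrite liftE; apply: leq_trans (ms_rpc_ge p b); by move/inMP: xin; apply.
Qed.

Lemma L3 p x : minimax (rev_profile p) = [set x] -> x != y0 ->
  minimax (rev_profile (pc y0 p)) = [set E x].
Proof.
move=> Ex nxy; apply/setP => w; rewrite in_set1; apply/idP/eqP => [win|->]; last first.
  by apply: L2 => //; rewrite Ex set11.
have Hw := win; move/inMP: Hw => Hw.
case: (unliftP ord_max w) Hw win => [b ->|->] Hw win.
- rewrite liftE in Hw *; congr E; apply/set1P; rewrite -Ex; apply/inMP => v.
  apply: leq_trans (ms_rpc_ge p b) _.
  case: (eqVneq v y0) => [->|nvy]; first by rewrite -(msrz y0 p); exact: Hw.
  rewrite -(msrE p nvy); exact: Hw.
- exfalso; move/negP: nxy; apply; apply/eqP.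
  suff : y0 \in [set x] by move/set1P.
  rewrite -Ex; apply/inMP => v; rewrite -(msrz y0 p).
  case: (eqVneq v y0) => [->|nvy]; first by rewrite msrz.
  rewrite -(msrE p nvy); exact: Hw.
Qed.

End CloneSets.

Lemma exists_neq n (x : 'I_n) : 1 < n -> exists y0, y0 != x.
Proof.
move=> n2; have : 0 < #|[set y : 'I_n | y != x]| by rewrite card_neq; lia.
move/card_gt0P => [y0]; rewrite inE => ?; by exists y0.
Qed.

Lemma clone1 h n : 1 < n -> suffers1 (@minimax h n) -> suffers1 (@minimax h n.+1).
Proof.
move=> n2 [p [x [E1 Er]]].
have [y0 nyx] := exists_neq x n2.
have yout : y0 \notin minimax p by rewrite E1 in_set1.
exists (pc y0 p), (E x); split; first by rewrite L1 // E1 imset_set1.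
apply: L3 => //; by rewrite eq_sym.
Qed.

Lemma clone2 h n : 1 < n -> suffers2 (@minimax h n) -> suffers2 (@minimax h n.+1).
Proof.
move=> n2 [p [C1 Hne]]; have [x E1] : exists x, minimax p = [set x] by apply/cards1P/eqP.
have xinr : x \in minimax (rev_profile p).
  case/set0Pn: Hne => v; rewrite inE E1 in_set1 => /andP [/eqP -> //].
have [y0 nyx] := exists_neq x n2.
have yout : y0 \notin minimax p by rewrite E1 in_set1.
exists (pc y0 p); rewrite L1 // E1 imset_set1 cards1; split => //.
apply/set0Pn; exists (E x); rewrite inE set11 /=; apply: L2 => //; by rewrite eq_sym.
Qed.

Lemma clone3 h n : 1 < n -> suffers3 (@minimax h n) -> suffers3 (@minimax h n.+1).
Proof.
move=> n2 [p [Hc Hne]].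
case/set0Pn: Hne => x; rewrite inE => /andP [xin xinr].
have [y0 yout] : exists y0, y0 \notin minimax p.
  apply/existsP; rewrite -negb_forall; apply/negP => /forallP H.
  have : minimax p = [set: 'I_n] by apply/setP => v; rewrite in_setT; apply: H.
  by move=> E'; rewrite E' cardsT card_ord ltnn in Hc.
have nxy : x != y0 by apply/negP => /eqP E'; rewrite -E' xin in yout.
exists (pc y0 p); rewrite L1 // card_imset; last exact: E_inj.
split; first by apply: (leq_trans Hc).

apply/set0Pn; exists (E x); rewrite inE mem_imset ?xin /=; last exact: E_inj.
exact: L2.
Qed.

Section Mk.
Variables (h n' : nat).
Local Notation n := n'.+1.

Definition wfs (s : seq nat) := perm_eq s (iota 0 n).

Definition rk (s : seq nat) (x : 'I_n) : 'I_n := inord (nth 0 s x).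

Lemma wfs_nth s (x : 'I_n) : wfs s -> nth 0 s x < n.
Proof.
move=> H; have Hs : size s = n by rewrite (perm_size H) size_iota.
have : nth 0 s x \in iota 0 n by rewrite -(perm_mem H) mem_nth // Hs.
by rewrite mem_iota.
Qed.

Lemma rk_inj s : wfs s -> injective (rk s).
Proof.
move=> H x y E0; have := congr1 val E0; rewrite /rk /= !inordK ?wfs_nth // => E.
have Hs : size s = n by rewrite (perm_size H) size_iota.
have U : uniq s by rewrite (perm_uniq H) iota_uniq.
have : (nth 0 s x == nth 0 s y) = (val x == val y) by apply: nth_uniq; rewrite ?Hs ?ltn_ord.
rewrite E eqxx => /esym /eqP; exact: val_inj.
Qed.

Definition mkperm s : linord n :=
  match wfs s =P true with ReflectT H => perm (rk_inj H) | ReflectF _ => 1%g end.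

Lemma mkpermE s x : wfs s -> (mkperm s x : nat) = nth 0 s x.
Proof.
move=> H; rewrite /mkperm; case: (wfs s =P true) => [H'|]; last by rewrite H.
by rewrite permE /rk inordK ?wfs_nth.
Qed.

Definition mkprof (L : seq (seq nat)) : profile h n := [ffun i : 'I_h => mkperm (nth [::] L i)].

Definition beatsL (L : seq (seq nat)) y x := count (fun s => nth 0 s y < nth 0 s x) L.

Lemma count_big (T : Type) (P : pred T) L : count P L = \sum_(s <- L) (P s : nat).
Proof. elim: L => [|a L IH]; by rewrite ?big_nil ?big_cons //= IH. Qed.

Lemma beats_mk L (y x : 'I_n) : size L = h -> all wfs L ->
  beats (mkprof L) y x = beatsL L y x.
Proof.
move=> HL Hw; rewrite beats_sum /beatsL count_big (big_nth [::]) HL big_mkord.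
apply: eq_bigr => i _; rewrite /mkprof ffunE /prefers !mkpermE //;
  apply: (allP Hw); apply: mem_nth; by rewrite HL.
Qed.

Definition msL L x := foldr maxn 0 [seq beatsL L y x | y <- iota 0 n & y != x].
Definition mrL L x := foldr maxn 0 [seq beatsL L x y | y <- iota 0 n & y != x].

Lemma max_iota (F : nat -> nat) (x : 'I_n) :
  \max_(y : 'I_n | y != x) F y = foldr maxn 0 [seq F y | y <- iota 0 n & y != nat_of_ord x].
Proof.
rewrite foldrE big_map big_filter -[iota 0 n]/(index_iota 0 n) big_mkord.
by apply: eq_bigl => y; rewrite -(inj_eq val_inj).
Qed.

Lemma ms_mk L (x : 'I_n) : size L = h -> all wfs L -> maxscore (mkprof L) x = msL L x.
Proof.
move=> HL Hw; rewrite /maxscore /msL -max_iota; apply: eq_bigr => y _; exact: beats_mk.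
Qed.

Lemma mr_mk L (x : 'I_n) : size L = h -> all wfs L -> maxscore (rev_profile (mkprof L)) x = mrL L x.
Proof.
move=> HL Hw; rewrite ms_rev /mrL -max_iota; apply: eq_bigr => y _; exact: beats_mk.
Qed.

Definition inL L x := all (fun y => msL L x <= msL L y) (iota 0 n).
Definition inRL L x := all (fun y => mrL L x <= mrL L y) (iota 0 n).

Lemma forall_iota (P : nat -> bool) : [forall y : 'I_n, P y] = all P (iota 0 n).
Proof.
apply/forallP/allP => [H y|H y]; last by apply: H; rewrite mem_iota /= add0n ltn_ord.
rewrite mem_iota add0n /= => Hy; exact: (H (Ordinal Hy)).
Qed.

Lemma in_mk L (x : 'I_n) : size L = h -> all wfs L -> (x \in minimax (mkprof L)) = inL L x.
Proof.
move=> HL Hw; rewrite inM /inL -forall_iota; apply: eq_forallb => y; by rewrite !ms_mk.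
Qed.

Lemma in_mkr L (x : 'I_n) : size L = h -> all wfs L ->
  (x \in minimax (rev_profile (mkprof L))) = inRL L x.
Proof.
move=> HL Hw; rewrite inM /inRL -forall_iota; apply: eq_forallb => y; by rewrite !mr_mk.
Qed.

Lemma set1_mk (A : {set 'I_n}) (f : nat -> bool) x0 :
  x0 < n -> (forall x : 'I_n, (x \in A) = f x) -> all (fun k => f k == (k == x0)) (iota 0 n) ->
  A = [set inord x0].
Proof.
move=> Hx0 HA Hall; apply/setP => w; rewrite HA in_set1.
have := allP Hall w; rewrite mem_iota add0n ltn_ord => /(_ isT) /eqP ->.
by rewrite -(inj_eq val_inj) /= inordK.
Qed.

Definition chk1 L x0 := all (fun k => inL L k == (k == x0)) (iota 0 n) &&
                        all (fun k => inRL L k == (k == x0)) (iota 0 n).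
Definition chk2 L x0 := all (fun k => inL L k == (k == x0)) (iota 0 n) && inRL L x0.
Definition chk3 L x0 w0 := [&& inL L x0, inRL L x0, w0 < n & ~~ inL L w0].

Lemma suff1_mk L x0 : size L = h -> all wfs L -> x0 < n -> chk1 L x0 -> suffers1 (@minimax h n).
Proof.
move=> HL Hw Hx0 /andP [C1 C2]; exists (mkprof L), (inord x0); split.
  apply: set1_mk C1 => // x; exact: in_mk.
apply: set1_mk C2 => // x; exact: in_mkr.
Qed.

Lemma suff2_mk L x0 : size L = h -> all wfs L -> x0 < n -> chk2 L x0 -> suffers2 (@minimax h n).
Proof.
move=> HL Hw Hx0 /andP [C1 C2]; exists (mkprof L).
have E1 : minimax (mkprof L) = [set inord x0] by apply: set1_mk C1 => // x; exact: in_mk.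
rewrite E1 cards1; split => //; apply/set0Pn; exists (inord x0); rewrite inE set11 /= in_mkr //.
by rewrite inordK.
Qed.

Lemma suff3_mk L x0 w0 : size L = h -> all wfs L -> x0 < n -> chk3 L x0 w0 -> suffers3 (@minimax h n).
Proof.
move=> HL Hw Hx0 /and4P [C1 C2 Hw0 C3]; exists (mkprof L); split.
  have Hp : minimax (mkprof L) \proper [set: 'I_n].
    rewrite properT; apply/negP => /eqP E'.
    have : (Ordinal Hw0) \in minimax (mkprof L) by rewrite E' in_setT.
    by rewrite in_mk //= (negbTE C3).
  by have := proper_card Hp; rewrite cardsT card_ord.
apply/set0Pn; exists (inord x0); rewrite inE in_mk // in_mkr // inordK //; by rewrite C1 C2.
Qed.

End Mk.

Ltac vmc := vm_compute; reflexivity.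

Lemma base1_6_4 : suffers1 (@minimax 6 4).
Proof.
apply: (@suff1_mk 6 3 [:: [:: 0; 1; 2; 3]; [:: 2; 3; 1; 0]; [:: 0; 1; 3; 2]; [:: 2; 0; 3; 1]; [:: 2; 3; 0; 1]; [:: 3; 1; 0; 2]] 2); vmc.
Qed.

Lemma base1_4_5 : suffers1 (@minimax 4 5).
Proof.
apply: (@suff1_mk 4 4 [:: [:: 4; 3; 0; 1; 2]; [:: 2; 1; 4; 3; 0]; [:: 0; 3; 4; 1; 2]; [:: 2; 1; 0; 3; 4]] 2); vmc.
Qed.

Lemma base1_9_4 : suffers1 (@minimax 9 4).
Proof.
apply: (@suff1_mk 9 3 [:: [:: 1; 0; 3; 2]; [:: 3; 2; 0; 1]; [:: 1; 0; 3; 2]; [:: 1; 3; 0; 2]; [:: 1; 3; 0; 2]; [:: 2; 0; 1; 3]; [:: 0; 2; 3; 1]; [:: 2; 1; 3; 0]; [:: 3; 2; 1; 0]] 2); vmc.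
Qed.

Lemma base1_7_5 : suffers1 (@minimax 7 5).
Proof.
apply: (@suff1_mk 7 4 [:: [:: 1; 3; 4; 2; 0]; [:: 0; 1; 3; 2; 4]; [:: 4; 0; 2; 3; 1]; [:: 4; 0; 1; 3; 2]; [:: 0; 1; 2; 3; 4]; [:: 3; 4; 0; 1; 2]; [:: 3; 4; 1; 0; 2]] 3); vmc.
Qed.

Lemma base1_5_6 : suffers1 (@minimax 5 6).
Proof.
apply: (@suff1_mk 5 5 [:: [:: 1; 4; 3; 5; 0; 2]; [:: 5; 4; 3; 0; 1; 2]; [:: 4; 2; 1; 3; 5; 0]; [:: 0; 2; 1; 3; 4; 5]; [:: 5; 0; 4; 1; 2; 3]] 0); vmc.
Qed.

Lemma base2_3_4 : suffers2 (@minimax 3 4).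
Proof.
apply: (@suff2_mk 3 3 [:: [:: 1; 0; 2; 3]; [:: 1; 3; 0; 2]; [:: 1; 2; 3; 0]] 0); vmc.
Qed.

Lemma base3_2_3 : suffers3 (@minimax 2 3).
Proof.
apply: (@suff3_mk 2 2 [:: [:: 2; 1; 0]; [:: 1; 0; 2]] 2 0); vmc.
Qed.

Lemma base3_5_3 : suffers3 (@minimax 5 3).
Proof.
apply: (@suff3_mk 5 2 [:: [:: 0; 2; 1]; [:: 2; 1; 0]; [:: 1; 0; 2]; [:: 2; 1; 0]; [:: 0; 2; 1]] 0 1); vmc.
Qed.

Definition S (j h n : nat) : Prop :=
  match j with 1 => suffers1 (@minimax h n) | 2 => suffers2 (@minimax h n) | _ => suffers3 (@minimax h n) end.

Lemma S_up j h n k d : (j = 1 \/ j = 2 \/ j = 3) -> 1 < n -> S j h n -> S j (h + 2 * k) (n + d).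
Proof.
move=> Hj n2 H.
have Hh : S j (h + 2 * k) n.
  elim: k => [|k IH]; first by rewrite muln0 addn0.
  have -> : h + 2 * k.+1 = (h + 2 * k) + 2 by lia.
  exact: plus2.
elim: d => [|d IH]; first by rewrite addn0.
rewrite addnS; have n2' : 1 < n + d by lia.
case: Hj IH => [->|[->|->]] /= IH.
- exact: clone1.
- exact: clone2.
- exact: clone3.
Qed.

Lemma get j h0 n0 h n : (j = 1 \/ j = 2 \/ j = 3) -> 1 < n0 -> S j h0 n0 ->
  h0 <= h -> ~~ odd (h - h0) -> n0 <= n -> S j h n.
Proof.
move=> Hj n2 H hle hodd nle.
have -> : h = h0 + 2 * (h - h0)./2.
  have := odd_double_half (h - h0); rewrite (negbTE hodd) add0n -mul2n; lia.
have -> : n = n0 + (n - n0) by lia.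
exact: S_up.
Qed.

Lemma suff1 h n : 2 <= h -> 2 <= n -> ~~ T1 h n -> suffers1 (@minimax h n).
Proof.
move=> h2 n2 HT; rewrite /T1 in HT.
have h4 : 4 <= h by lia.
have n4 : 4 <= n by lia.
case Ho: (odd h).
- case: (ltngtP h 7) => [hlt|hgt|hh].
  + have ne4 : h != 4 by apply/negP => /eqP E'; rewrite E' in Ho.
    have ne6 : h != 6 by apply/negP => /eqP E'; rewrite E' in Ho.
    have h5 : h = 5 by lia.
    subst h; have n6 : 6 <= n by lia.
    apply: (get (j := 1) (h0 := 5) (n0 := 6) (or_introl erefl)) => //; exact: base1_5_6.
  + have ne8 : h != 8 by apply/negP => /eqP E'; rewrite E' in Ho.
    have h9 : 9 <= h by lia.
    apply: (get (j := 1) (h0 := 9) (n0 := 4) (or_introl erefl)) => //; first exact: base1_9_4.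
    by rewrite oddB ?Ho.
  + subst h; have n5 : 5 <= n by lia.
    apply: (get (j := 1) (h0 := 7) (n0 := 5) (or_introl erefl)) => //; exact: base1_7_5.
- case: (ltngtP h 4) => [hlt|hgt|hh].
  + lia.
  + have ne5 : h != 5 by apply/negP => /eqP E'; rewrite E' in Ho.
    have h6 : 6 <= h by lia.
    apply: (get (j := 1) (h0 := 6) (n0 := 4) (or_introl erefl)) => //; first exact: base1_6_4.
    by rewrite oddB ?Ho.
  + subst h; have n5 : 5 <= n by lia.
    apply: (get (j := 1) (h0 := 4) (n0 := 5) (or_introl erefl)) => //; exact: base1_4_5.
Qed.

Lemma suff2 h n : 2 <= h -> 2 <= n -> ~~ T2 h n -> suffers2 (@minimax h n).
Proof.
move=> h2 n2 HT; rewrite /T2 in HT.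
have h3 : 3 <= h by lia.
have n4 : 4 <= n by lia.
have J : (2 = 1 \/ 2 = 2 \/ 2 = 3) by right; left.
case Ho: (odd h).
- apply: (get (j := 2) (h0 := 3) (n0 := 4) J) => //; first exact: base2_3_4.
  by rewrite oddB ?Ho.
- case: (ltngtP h 4) => [hlt|hgt|hh].
  + have ne3 : h != 3 by apply/negP => /eqP E'; rewrite E' in Ho.
    lia.
  + have ne5 : h != 5 by apply/negP => /eqP E'; rewrite E' in Ho.
    have h6 : 6 <= h by lia.
    apply: (get (j := 2) (h0 := 6) (n0 := 4) J) => //; first exact: (s1_s2 base1_6_4).
    by rewrite oddB ?Ho.
  + subst h; have n5 : 5 <= n by lia.
    apply: (get (j := 2) (h0 := 4) (n0 := 5) J) => //; exact: (s1_s2 base1_4_5).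
Qed.

Lemma suff3 h n : 2 <= h -> 2 <= n -> ~~ T3 h n -> suffers3 (@minimax h n).
Proof.
move=> h2 n2 HT; rewrite /T3 in HT.
have n3 : 3 <= n by lia.
have J : (3 = 1 \/ 3 = 2 \/ 3 = 3) by right; right.
case Ho: (odd h).
- case: (ltngtP h 3) => [hlt|hgt|hh].
  + lia.
  + have ne4 : h != 4 by apply/negP => /eqP E'; rewrite E' in Ho.
    have h5 : 5 <= h by lia.
    apply: (get (j := 3) (h0 := 5) (n0 := 3) J) => //; first exact: base3_5_3.
    by rewrite oddB ?Ho.
  + subst h; have n4 : 4 <= n by lia.
    apply: (get (j := 3) (h0 := 3) (n0 := 4) J) => //; exact: (s2_s3 (isT : 1 < 4) base2_3_4).
- apply: (get (j := 3) (h0 := 2) (n0 := 3) J) => //; first exact: base3_2_3.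
  by rewrite oddB ?Ho.
Qed.

Lemma imm1 h n : 2 <= h -> 2 <= n -> T1 h n -> ~ suffers1 (@minimax h n).
Proof.
move=> h2 n2 HT Hs; have [K [H1 H2]] := type1_ineq n2 Hs.
rewrite /T1 in HT.
case/orP: HT => [h3|HT].
  have [E'|E'] : h = 2 \/ h = 3 by lia.
  - subst h; have K1 : 1 <= K by lia. nia.
  - subst h; have K1 : 2 <= K by lia. nia.
case/orP: HT => [n3|HT].
  have [E'|E'] : n = 2 \/ n = 3 by lia.
  - subst n; simpl in H2; lia.
  - subst n; simpl in H2; lia.
have [[E1 E2]|[[E1 E2]|[[E1 E2]|[E1 E2]]]] : (h = 4 /\ n = 4) \/ (h = 5 /\ n = 4) \/ (h = 7 /\ n = 4) \/ (h = 5 /\ n = 5) by lia.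
all: subst h n; simpl in H2; lia.
Qed.

Lemma imm2 h n : 2 <= h -> 2 <= n -> T2 h n -> ~ suffers2 (@minimax h n).
Proof.
move=> h2 n2 HT Hs; have := type2_ineq n2 Hs.
rewrite /T2 in HT.
case/orP: HT => [/eqP h3|HT].
  subst h => [[[K [H1 H2]]|[K [H1 H2]]]].
  - have K1 : 1 <= K by lia. nia.
  - have K1 : 2 <= K by lia. nia.
case/orP: HT => [n3|/andP [/eqP -> /eqP ->]].
  have [E'|E'] : n = 2 \/ n = 3 by lia.
  - subst n => [[[K [H1 H2]]|[K [H1 H2]]]]; simpl in H2; lia.
  - subst n => [[[K [H1 H2]]|[K [H1 H2]]]]; simpl in H2; lia.
move=> [[K [H1 H2]]|[K [H1 H2]]]; simpl in H2; lia.
Qed.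

Lemma imm3 h n : 2 <= h -> 2 <= n -> T3 h n -> ~ suffers3 (@minimax h n).
Proof.
move=> h2 n2; rewrite /T3 => /orP [/eqP E'|/andP [/eqP -> /eqP ->]]; last exact: immune3_33.
subst n => Hs; apply: (imm2 h2 n2 _ (s3_s2_n2 Hs)); by rewrite /T2 orbT.
Qed.

Unset Implicit Arguments.

Theorem theorem1 (h n : nat) (hh : 2 <= h) (hn : 2 <= n) :
  (~ suffers1 (@minimax h n) <-> T1 h n) /\
  (~ suffers2 (@minimax h n) <-> T2 h n) /\
  (~ suffers3 (@minimax h n) <-> T3 h n).
Proof.
split; [|split]; split.
- move=> H; apply/negPn/negP => HT; apply: H; exact: suff1.
- exact: imm1.
- move=> H; apply/negPn/negP => HT; apply: H; exact: suff2.
- exact: imm2.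
- move=> H; apply/negPn/negP => HT; apply: H; exact: suff3.
- exact: imm3.
Qed.
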